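(* For any choice of the almost disjoint family $\mathcal{A}$ and of the enumeration of $X$ in its definition, $\rho^{[0,1]}$ is a partition regular function and $\mathcal{I}_{\rho^{[0,1]}}=\mathrm{conv}$.
   Context: $\mathrm{conv}$ is the ideal on $\mathbb{Q}\cap[0,1]$ of all sets covered by the ranges of finitely many sequences in $\mathbb{Q}\cap[0,1]$ convergent in $[0,1]$. Definition of $\rho^{[0,1]}$: let $\mathcal{A}=\{A_\alpha:\alpha<\mathfrak{c}\}$ be an almost disjoint family on $\omega$ (pairwise distinct infinite subsets of $\omega$ with pairwise finite intersections). Let $X$ be the set of all $x\colon\omega\times\omega\to[0,1]\cap\mathbb{Q}$ such that: (i) for every $p\in[0,1]$ there is an open neighborhood $U$ of $p$ with $x[(\omega\setminus[0,n])\times\omega]\not\subseteq U$ for all $n\in\omega$; (ii) $x$ is injective; (iii) $x[(\omega\setminus[0,n])\times\omega]\notin\mathrm{conv}$ for all $n$. Fix an enumeration $X=\{x_\alpha:\alpha<\mathfrak{c}\}$. Let $\overline{\mathcal{A}}=\{A\setminus K:A\in\mathcal{A},K\in[\omega]^{<\omega}\}$ and $\rho^{[0,1]}\colon\overline{\mathcal{A}}\to[[0,1]\cap\mathbb{Q}]^\omega$, $\rho^{[0,1]}(A_\alpha\setminus K)=x_\alpha[(\omega\setminus[0,\max(A_\alpha\cap K)])\times\omega]$, with the convention $\max\emptyset=0$. Here $[0,m]$ denotes $\{0,1,\dots,m\}$. Partition regular function: $\Lambda,\Omega$ countably infinite, $\mathcal{F}$ a nonempty family of infinite subsets of $\Omega$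 with $F\setminus K\in\mathcal{F}$ for $F\in\mathcal{F}$, $K$ finite; $\rho\colon\mathcal{F}\to[\Lambda]^\omega$ is partition regular if (M) $E\subseteq F\Rightarrow\rho(E)\subseteq\rho(F)$; (R) if $F\in\mathcal{F}$ and $\rho(F)=A\cup B$ then some $E\in\mathcal{F}$ has $\rho(E)\subseteq A$ or $\rho(E)\subseteq B$; (S) for every $E\in\mathcal{F}$ there is $F\in\mathcal{F}$, $F\subseteq E$, such that every $a\in\rho(F)$ satisfies $a\notin\rho(F\setminus K)$ for some finite $K\subseteq\Omega$. $\mathcal{I}_\rho=\{A\subseteq\Lambda:\forall F\in\mathcal{F}\ \rho(F)\not\subseteq A\}$. *)

(* Defs.v *)
From HB Require Import structures.
From mathcomp Require Import all_boot all_order all_algebra.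
From mathcomp Require Import all_classical all_reals all_analysis.
Set Implicit Arguments. Unset Strict Implicit. Unset Printing Implicit Defensive.
Import Order.TTheory GRing.Theory Num.Theory.
Import numFieldNormedType.Exports.
Local Open Scope classical_set_scope.
Local Open Scope ring_scope.

Definition Lam := {q : rat | (0 <= q <= 1)%R}.

(* Partition regular functions rho : F -> [Lam]^omega, F a family of
   subsets of Om.  rho is a total function on set Om, only its values on
   members of F matter. *)
Definition partition_regular {L Om : Type} (F : set (set Om))
  (rho : set Om -> set L) : Prop :=
  (exists E, F E) /\
  (forall E, F E -> infinite_set E) /\
  (forall E K, F E -> finite_set K -> F (E `\` K)) /\
  (forall E, F E -> infinite_set (rho E)) /\
  (forall E G, F E -> F G -> E `<=` G -> rho E `<=` rho G) /\
  (forall G (A B : set L), F G -> rho G = A `|` B ->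
     exists E, F E /\ (rho E `<=` A \/ rho E `<=` B)) /\
  (forall E, F E -> exists G, F G /\ G `<=` E /\
     forall a, rho G a -> exists K : set Om, finite_set K /\ ~ rho (G `\` K) a).

Definition I_rho {L Om : Type} (F : set (set Om)) (rho : set Om -> set L)
  : set (set L) :=
  fun B => forall E, F E -> ~ (rho E `<=` B).

Definition conv01 (R : realType) : set (set Lam) :=
  fun B => exists (k : nat) (s : nat -> nat -> Lam),
    (forall i, (i < k)%N -> exists l : R, 0 <= l <= 1 /\
        (fun n => (ratr (val (s i n)) : R)) @ \oo --> l) /\
    (forall q, B q -> exists i, (i < k)%N /\ exists n, s i n = q).

Definition tail_image (x : nat -> nat -> Lam) (n : nat) : set Lam :=
  fun q => exists i j, (n < i)%N /\ x i j = q.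

Definition inX (R : realType) (x : nat -> nat -> Lam) : Prop :=
  (forall p : R, 0 <= p <= 1 -> exists U : set R, open U /\ U p /\
      forall n, ~ (forall q, tail_image x n q -> U (ratr (val q)))) /\
  injective (fun ij : nat * nat => x ij.1 ij.2) /\
  (forall n, ~ conv01 R (tail_image x n)).

(* almost disjoint family {A_a : a < c}, indexed by R (|R| = c) *)
Definition almost_disjoint_family (R : realType) (A : R -> set nat) : Prop :=
  injective A /\ (forall a, infinite_set (A a)) /\
  (forall a b, a <> b -> finite_set (A a `&` A b)).

Definition enumeration_of_X (R : realType) (x : R -> nat -> nat -> Lam) : Prop :=
  (forall a, inX R (x a)) /\ injective x /\
  (forall y, inX R y -> exists a, x a = y).

Definition Abar (R : realType) (A : R -> set nat) : set (set nat) :=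
  fun E => exists a (K : set nat), finite_set K /\ E = A a `\` K.

(* rho^{[0,1]}(A_a \ K) = x_a[(omega \ [0, max(A_a ∩ K)]) x omega], max ∅ = 0:
   i ∉ [0, max(A_a ∩ K)] iff 0 < i and every k ∈ A_a ∩ K is < i. *)
Definition rho01 (R : realType) (A : R -> set nat) (x : R -> nat -> nat -> Lam)
  : set nat -> set Lam :=
  fun E q => exists a (K : set nat), finite_set K /\ E = A a `\` K /\
    exists i j, (0 < i)%N /\ (forall k, A a k -> K k -> (k < i)%N) /\ x a i j = q.

(* Main.v *)
Require Import Defs.
From mathcomp Require Import all_boot all_order all_algebra.
From mathcomp Require Import all_classical all_reals all_analysis.
From Stdlib Require Import ClassicalEpsilon.
From mathcomp Require Import zify ring lra.
From mathcomp Require Import finmap.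
Set Implicit Arguments. Unset Strict Implicit. Unset Printing Implicit Defensive.
Import Order.TTheory GRing.Theory Num.Theory.
Import numFieldNormedType.Exports.
Local Open Scope classical_set_scope.
Local Open Scope ring_scope.

Definition Lam0 : Lam := exist _ 0%R (erefl true).

Definition rv (R : realType) (q : Lam) : R := ratr (val q).

Lemma rv01 (R : realType) (q : Lam) : 0 <= rv R q <= 1.
Proof.
rewrite /rv; have /andP[h0 h1] := valP q.
by rewrite -(@rmorph0 _ _ (@ratr R)) -(@rmorph1 _ _ (@ratr R)) !ler_rat h0 h1.
Qed.

Lemma conv_sub (R : realType) (B C : set Lam) : conv01 R B -> C `<=` B -> conv01 R C.
Proof.
move=> [k [s [H1 H2]]] CB; exists k, s; split => // q /CB; exact: H2.
Qed.

Lemma conv_union (R : realType) (B C : set Lam) :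
  conv01 R B -> conv01 R C -> conv01 R (B `|` C).
Proof.
move=> [k1 [s1 [H1 H2]]] [k2 [s2 [G1 G2]]].
exists (k1 + k2)%N, (fun i => if (i < k1)%N then s1 i else s2 (i - k1)%N); split.
- move=> i ik; case: ifP => h; first exact: H1.
  apply: G1; move: h ik; lia.
- move=> q [/H2 [i [ik hn]]|/G2 [i [ik hn]]].
  + by exists i; rewrite ik; split; first lia.
  + exists (k1 + i)%N; split; first lia.
    rewrite ltnNge leq_addr /=. by rewrite addKn.
Qed.

Lemma conv_finite (R : realType) (B : set Lam) : finite_set B -> conv01 R B.
Proof.
move=> /finite_seqP [l ->].
exists (size l), (fun i _ => nth Lam0 l i); split.
- move=> i _; exists (rv R (nth Lam0 l i)); split; first exact: rv01.
  exact: cvg_cst.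
- move=> q /= ql; exists (index q l); split; first by rewrite index_mem.
  by exists 0%N; rewrite nth_index.
Qed.

Definition acc (R : realType) (S : set Lam) (p : R) :=
  forall e : R, 0 < e -> infinite_set [set s | S s /\ `|rv R s - p| < e].

Lemma acc_sub (R : realType) (S T : set Lam) (p : R) :
  S `<=` T -> acc S p -> acc T p.
Proof.
move=> ST h e e0; apply: sub_infinite_set (h e e0) => s [/ST ? ?]; by split.
Qed.

Lemma acc_ne (R : realType) (S : set Lam) (p : R) e :
  acc S p -> 0 < e -> exists s, S s /\ `|rv R s - p| < e.
Proof. by move=> h e0; have [s hs] := infinite_setN0 (h e e0); exists s. Qed.

Lemma acc01 (R : realType) (S : set Lam) (p : R) : acc S p -> 0 <= p <= 1.
Proof.
move=> h; apply/andP; split; rewrite leNgt; apply/negP => hp.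
- have e0 : 0 < - p by lra.
  have [s [_ hs]] := acc_ne h e0.
  have := ler_norm (rv R s - p); have := rv01 R s; lra.
- have e0 : 0 < p - 1 by lra.
  have [s [_ hs]] := acc_ne h e0.
  have := ler_norm (p - rv R s); rewrite distrC in hs; have := rv01 R s; lra.
Qed.

Lemma near_all_lt (P : nat -> nat -> Prop) k :
  (forall i, (i < k)%N -> \forall n \near \oo, P i n) ->
  \forall n \near \oo, forall i, (i < k)%N -> P i n.
Proof.
elim: k => [|k IH] H.
  by apply: nearW => n i.
have h1 := IH (fun i ik => H i (ltnW ik)).
have h2 := H k (ltnSn k).
apply: filterS2 h1 h2 => n h1 h2 i ik.
case: (ltnP i k) => ki; first exact: h1.
by have -> : i = k by lia.
Qed.

Lemma seq_of_ex (R : realType) (P : nat -> R -> Prop) k :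
  (forall i, (i < k)%N -> exists l, P i l) ->
  exists L : seq R, forall i, (i < k)%N -> exists l, l \in L /\ P i l.
Proof.
elim: k => [|k IH] H; first by exists [::].
have [L HL] := IH (fun i ik => H i (ltnW ik)).
have [l hl] := H k (ltnSn k).
exists (l :: L) => i ik.
case: (ltnP i k) => ki.
  have [l' [l'L hl']] := HL i ki.
  by exists l'; rewrite in_cons l'L orbT.
have -> : i = k by lia.
by exists l; rewrite mem_head.
Qed.

Lemma sep_seq (R : realType) (L : seq R) (q : R) :
  (forall l, l \in L -> l != q) -> exists e : R, 0 < e /\ forall l, l \in L -> e *+ 2 <= `|l - q|.
Proof.
elim: L => [|a L IH] H.
  by exists 1; split => // l.
have [e [e0 he]] := IH (fun l lL => H l (@mem_behead _ (a :: L) l lL)).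
have aq : a != q := H a (mem_head a L).
have aq0 : 0 < `|a - q| by rewrite normr_gt0 subr_eq0.
exists (Num.min e (`|a - q| / 2)); split.
  by rewrite lt_min e0 divr_gt0.
move=> l; rewrite in_cons => /orP [/eqP ->|/he h].
  apply: le_trans (_ : (`|a - q| / 2) *+ 2 <= _).
    by rewrite lerMn2r /= ge_min lexx orbT.
  by rewrite -mulr_natr -mulrA mulVf ?mulr1.
apply: le_trans h; by rewrite lerMn2r /= ge_min lexx.
Qed.

Lemma conv_acc (R : realType) (S : set Lam) :
  conv01 R S -> exists L : seq R, forall q, acc S q -> q \in L.
Proof.
move=> [k [s [Hl Hc]]].
have [L HL] := seq_of_ex Hl.
exists L => q hq; apply: contrapT => nq.
have [e [e0 he]] : exists e : R, 0 < e /\ forall l, l \in L -> e *+ 2 <= `|l - q|.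
  apply: sep_seq => l lL; apply/eqP => lq; apply: nq; by rewrite -lq.
have ev : forall i, (i < k)%N -> \forall n \near \oo, e <= `|rv R (s i n) - q|.
  move=> i ik; have [l [lL [_ hc]]] := HL i ik.
  move/cvgrPdist_lt: hc => /(_ e e0); apply: filterS => n hn.
  have := he l lL; rewrite mulr2n.
  have : `|l - q| <= `|l - rv R (s i n)| + `|rv R (s i n) - q|.
    exact: ler_distD.
  rewrite /rv in hn *; lra.
have [N _ HN] := near_all_lt ev.
apply: (hq e e0).
apply: (@sub_finite_set _ _ ((fun p : nat * nat => s p.1 p.2) @` (`I_k `*` `I_N))).
  move=> t [St ht]; have [i [ik [n hn]]] := Hc t St.
  exists (i, n) => //; split => //=.
  rewrite /= ltnNge; apply/negP => Nn.
  have := HN n Nn i ik; rewrite hn; lra.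
by apply: finite_image; apply: finite_setX.
Qed.

Lemma bolzano (R : realType) (S : set Lam) :
  (forall p : R, ~ acc S p) -> finite_set S.
Proof.
move=> H.
have /choice [ef hef] : forall p : R, exists e : R,
    0 < e /\ finite_set [set s | S s /\ `|rv R s - p| < e].
  move=> p; apply: contrapT => hn; apply: (H p) => e e0 fe.
  by apply: hn; exists e.
have hc := @segment_compact R 0 1.
rewrite compact_cover in hc.
have hcov : `[0, 1] `<=` cover setT (fun p : R => ball p (ef p)).
  by move=> x _; exists x => //; apply: ballxx; case: (hef x).
have [D' _ HD'] := hc R setT (fun p => ball p (ef p))
  (fun p _ => @ball_open _ _ p (ef p)) hcov.
have sub : S `<=` \bigcup_(p in ([set` D'] : set R)) [set s | S s /\ `|rv R s - p| < ef p].
  move=> s Ss.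
  have : (`[0, 1]%classic : set R) (rv R s) by rewrite /= in_itv /=; exact: rv01.
  move/HD' => [p pD bp]; exists p => //; split => //.
  by move: bp; rewrite -ball_normE /= distrC.
apply: (sub_finite_set sub).
apply: bigcup_finite; first exact: finite_fset.
by move=> p _; case: (hef p).
Qed.

Lemma seq_bound (l : seq nat) : exists N, forall i, i \in l -> (i < N)%N.
Proof.
elim: l => [|a l [N HN]]; first by exists 0%N.
exists (maxn a.+1 N) => i; rewrite in_cons => /orP [/eqP ->|/HN]; lia.
Qed.

Lemma finite_nat_ev (A : set nat) : finite_set A -> \forall n \near \oo, ~ A n.
Proof.
move=> /finite_seqP [l ->]; have [N HN] := seq_bound l.
exists N => // n /= Nn ln; have := HN n ln; lia.
Qed.

Lemma conv_single (R : realType) (S : set Lam) (p : R) :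
  (forall q, acc S q -> q = p) -> conv01 R S.
Proof.
move=> H.
case: (pselect (finite_set S)) => fS; first exact: conv_finite.
have f1 : forall e : R, 0 < e -> finite_set [set s | S s /\ ~ (`|rv R s - p| < e)].
  move=> e e0; apply: bolzano => q /[dup] hq /(acc_sub (fun s (hs : _ /\ _) => hs.1)) /H qp.
  rewrite qp in hq; have [s [[_ ns] hs]] := acc_ne hq e0; exact: ns.
have f2 : forall e : R, 0 < e -> exists s, S s /\ `|rv R s - p| < e.
  move=> e e0; apply: contrapT => hn; apply: fS.
  apply: sub_finite_set (f1 e e0) => s Ss; split => // hs; apply: hn; by exists s.
have f3 : acc S p.
  move=> e e0 fin; apply: fS.
  apply: (@sub_finite_set _ _ ([set s | S s /\ `|rv R s - p| < e] `|` [set s | S s /\ ~ (`|rv R s - p| < e)])).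
    move=> s Ss; case: (pselect (`|rv R s - p| < e)) => h; [left|right]; by split.
  rewrite finite_setU; split => //; exact: f1.
have /choice [w hw] : forall n : nat, exists s, S s /\ `|rv R s - p| < n.+1%:R^-1.
  by move=> n; apply: f2.
pose e n := if choice.pickle_inv n is Some t then (if pselect (S t) is left _ then t else w n) else w n.
exists 1%N, (fun _ => e); split.
- move=> i _; exists p; split; first exact: acc01 f3.
  apply/cvgrPdist_lt => eps eps0.
  have F := finite_nat_ev (finite_image (fun t : Lam => choice.pickle t) (f1 eps eps0)).
  have G := near_infty_natSinv_lt (PosNum eps0).
  apply: filterS2 F G => n nF nG.
  have nG' : n.+1%:R^-1 < eps := nG.
  have hwn := (hw n).2; rewrite /rv in hwn.
  rewrite distrC /e; case hn: (choice.pickle_inv n) => [t|].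
    case: pselect => St.
      apply: contrapT => ht; apply: nF; exists t; first by split.
      by have := @choice.pickle_invK {q : rat | (0 <= q <= 1)%R} n; rewrite hn.
    exact: lt_trans hwn nG'.
  exact: lt_trans hwn nG'.
- move=> q Sq; exists 0%N; split => //; exists (choice.pickle q).
  rewrite /e choice.pickleK_inv; by case: pselect.
Qed.

Lemma conv_list (R : realType) (L : seq R) (S : set Lam) :
  (forall q, acc S q -> q \in L) -> conv01 R S.
Proof.
elim: L S => [|p L IH] S H.
  apply: conv_finite; apply: bolzano => q /H; by rewrite in_nil.
have [e [e0 he]] : exists e : R, 0 < e /\ forall l, l \in [seq l <- L | l != p] -> e *+ 2 <= `|l - p|.
  by apply: sep_seq => l; rewrite mem_filter => /andP[].
pose S1 := [set s | S s /\ `|rv R s - p| < e].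
pose S2 := [set s | S s /\ ~ (`|rv R s - p| < e)].
apply: (@conv_sub _ (S1 `|` S2)); last first.
  move=> s Ss; case: (pselect (`|rv R s - p| < e)) => h; [left|right]; by split.
apply: conv_union.
- apply: (@conv_single _ _ p) => q hq.
  have hS : acc S q by apply: acc_sub hq => s [].
  have qp : `|q - p| <= e.
    rewrite leNgt; apply/negP => hlt.
    have e'0 : 0 < `|q - p| - e by rewrite subr_gt0.
    have [s [[_ hs1] hs2]] := acc_ne hq e'0.
    have := ler_distD (rv R s) q p; rewrite distrC in hs2; lra.
  apply/eqP; apply: contraT => nqp.
  have : q \in [seq l <- L | l != p].
    rewrite mem_filter nqp /=; move: (H q hS); rewrite in_cons (negbTE nqp) //.
  move/he; rewrite mulr2n; lra.
- apply: IH => q hq.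
  have hS : acc S q by apply: acc_sub hq => s [].
  move: (H q hS); rewrite in_cons => /orP [/eqP qp|//].
  rewrite qp in hq; have [s [[_ hs1] hs2]] := acc_ne hq e0.
  by exfalso; apply: hs1.
Qed.

Fixpoint recl (T : Type) (f : nat -> seq T -> T) (n : nat) : seq T :=
  if n is n'.+1 then f n' (recl f n') :: recl f n' else [::].

Lemma recl_mem (T : eqType) (f : nat -> seq T -> T) k n :
  (k < n)%N -> f k (recl f k) \in recl f n.
Proof.
elim: n => [//|n IH] kn /=; rewrite in_cons.
case: (ltnP k n) => h; first by rewrite IH ?orbT.
have -> : k = n by lia.
by rewrite eqxx.
Qed.

Lemma recl_inj (T : eqType) (f : nat -> seq T -> T) :
  (forall n l, f n l \notin l) -> injective (fun n => f n (recl f n)).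
Proof.
move=> hf a b /= hab.
case: (ltngtP a b) => // h.
- by have := hf b (recl f b); rewrite -hab recl_mem.
- by have := hf a (recl f a); rewrite hab recl_mem.
Qed.

Lemma inf_ev (T : Type) (f : nat -> T) (P : set T) :
  injective f -> (exists J, forall j, (J <= j)%N -> P (f j)) -> infinite_set P.
Proof.
move=> finj [J HJ] fP.
have fpre : finite_set (f @^-1` P).
  by apply: finite_preimage => //; move=> a b _ _; exact: finj.
apply: infinite_nat.
apply: (@sub_finite_set _ _ (`I_J `|` (f @^-1` P))).
  move=> j _; case: (ltnP j J) => h; [left|right] => //; exact: HJ.
by rewrite finite_setU; split.
Qed.

Lemma main_constr (R : realType) (S : set Lam) :
  ~ conv01 R S -> exists y, inX R y /\ forall i j, S (y i j).
Proof.
move=> nS.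
have hnew : forall L : seq R, exists q, acc S q /\ q \notin L.
  move=> L; apply: contrapT => hn; apply: nS; apply: (@conv_list _ L) => q hq.
  apply: contrapT => nq; apply: hn; exists q; split => //; exact/negP.
have /choice [pq hpq] := hnew.
pose qa n := pq (recl (fun _ l => pq l) n).
have qacc : forall n, acc S (qa n) by move=> n; case: (hpq (recl (fun _ l => pq l) n)).
have qinj : injective qa := recl_inj (fun n l => (hpq l).2).
pose D := `|qa 0%N - qa 1%N|.
have D0 : 0 < D by rewrite normr_gt0 subr_eq0; apply/eqP => /qinj.
pose tg (i j : nat) := if j == 0%N then qa 0%N else if j == 1%N then qa 1%N else qa (i + 2)%N.
pose r (j : nat) := D / 4 * j.+1%:R^-1.
have D4 : 0 < D / 4 by rewrite divr_gt0.
have r0 : forall j, 0 < r j by move=> j; rewrite /r mulr_gt0 // invr_gt0 ltr0n.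
have rle : forall j, r j <= D / 4.
  move=> j; rewrite /r ler_piMr ?(ltW D4) // invf_le1 ?ltr0n // ler1n //.
have tacc : forall i j, acc S (tg i j).
  by move=> i j; rewrite /tg; case: ifP => _; [|case: ifP => _]; apply: qacc.
pose dec m : nat * nat := odflt (0%N, 0%N) (choice.unpickle m).
pose Bm (m : nat) := [set s | S s /\ `|rv R s - tg (dec m).1 (dec m).2| < r (dec m).2].
have /choice [pz hpz] : forall m, exists f : seq Lam -> Lam, forall l, Bm m (f l) /\ f l \notin l.
  move=> m.
  have /choice [f hf] : forall l : seq Lam, exists s, Bm m s /\ s \notin l.
    move=> l.
    have := infinite_setD (tacc (dec m).1 (dec m).2 _ (r0 (dec m).2)) (finite_seq l).
    move/infinite_setN0 => [s [hs nsl]]; exists s; split => //; exact/negP.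
  by exists f.
pose z m := pz m (recl pz m).
have zinj : injective z := recl_inj (fun m l => (hpz m l).2).
have zB : forall m, Bm m (z m) := fun m => (hpz m _).1.
pose y (i j : nat) := z (choice.pickle (i, j)).
have decy : forall i j : nat, dec (choice.pickle (i, j)) = (i, j).
  by move=> i j; rewrite /dec choice.pickleK.
have yS : forall i j, S (y i j) by move=> i j; case: (zB (choice.pickle (i, j))).
have yc : forall i j, `|rv R (y i j) - tg i j| < r j.
  by move=> i j; case: (zB (choice.pickle (i, j))); rewrite /= decy.
have yinj : forall i j i' j', y i j = y i' j' -> (i, j) = (i', j').
  by move=> i j i' j' /zinj /(pcan_inj choice.pickleK).
exists y; split => //.
split; [|split].
-
  move=> p _; exists (ball p (D / 4)); split; first exact: ball_open.
  split; first exact: ballxx.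
  move=> n hn.
  have h0 := hn (y n.+1 0%N) (ex_intro _ n.+1 (ex_intro _ 0%N (conj (ltnSn n) erefl))).
  have h1 := hn (y n.+1 1%N) (ex_intro _ n.+1 (ex_intro _ 1%N (conj (ltnSn n) erefl))).
  move: h0 h1; rewrite -ball_normE /= => h0 h1.
  have h0' : `|p - rv R (y n.+1 0%N)| < D / 4 := h0.
  have h1' : `|p - rv R (y n.+1 1%N)| < D / 4 := h1.
  clear h0 h1.
  have c0 := yc n.+1 0%N; have c1 := yc n.+1 1%N.
  rewrite /tg /= in c0 c1.
  have r1 := rle 1%N.
  have e0 : r 0%N = D / 4 by rewrite /r invr1 mulr1.
  have t1 := ler_distD (rv R (y n.+1 0%N)) (qa 0%N) (qa 1%N).
  have t2 := ler_distD p (rv R (y n.+1 0%N)) (qa 1%N).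
  have t3 := ler_distD (rv R (y n.+1 1%N)) p (qa 1%N).
  rewrite distrC in c0; rewrite (distrC (rv R (y n.+1 0%N)) p) in t2.
  rewrite /rv in c0 c1 t1 t2 t3 h0' h1'.
  have : D < D / 4 + D / 4 + D / 4 + r 1%N.
    have hD : D = `|qa 0%N - qa 1%N| by [].
    lra.
  lra.
-
  by move=> [i j] [i' j'] /= /yinj.
-
  move=> n hconv.
  have [L HL] := conv_acc hconv.
  have hacc : forall i, (n < i)%N -> acc (tail_image y n) (qa (i + 2)%N).
    move=> i ni e e0.
    have hJ : exists J, forall j, (J <= j)%N -> (tail_image y n (y i j) /\ `|rv R (y i j) - qa (i + 2)%N| < e).
      have G := near_infty_natSinv_lt (PosNum (divr_gt0 e0 D4)).
      case: G => J _ HJ.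
      exists (maxn J 2) => j Jj; split; first by exists i, j.
      have hj : j.+1%:R^-1 < e / (D / 4) := HJ j (leq_trans (leq_maxl _ _) Jj).
      have -> : qa (i + 2)%N = tg i j.
        rewrite /tg; have -> : (j == 0%N) = false by apply/negbTE; rewrite -lt0n; lia.
        by have -> : (j == 1%N) = false by apply/negbTE; lia.
      apply: lt_le_trans (yc i j) _.
      have De : e = e / (D / 4) * (D / 4) by rewrite divfK // gt_eqF.
      rewrite /r [in X in _ <= X]De mulrC.
      by rewrite ler_pM2r // ltW.
    exact: (inf_ev (f := y i) (fun a b h => congr1 snd (yinj _ _ _ _ h)) hJ).
  pose M := [seq qa (n.+1 + k + 2)%N | k <- iota 0 (size L).+1].
  have uM : uniq M.
    rewrite map_inj_uniq ?iota_uniq // => a b /qinj; lia.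
  have sM : {subset M <= L}.
    move=> q /mapP [k _ ->]; apply: HL; apply: hacc; lia.
  by have := uniq_leq_size uM sM; rewrite size_map size_iota ltnn.
Qed.

Lemma finite_bound (K : set nat) : finite_set K -> exists N, forall k, K k -> (k < N)%N.
Proof.
move=> /finite_seqP [l ->]; have [N HN] := seq_bound l; exists N => k; exact: HN.
Qed.

Section Main.
Variables (R : realType) (A : R -> set nat) (x : R -> nat -> nat -> Lam).
Hypothesis hA : almost_disjoint_family A.
Hypothesis hx : enumeration_of_X x.

Lemma sub_same a b (K K' : set nat) : finite_set K -> A a `\` K `<=` A b `\` K' -> a = b.
Proof.
move=> fK sub; apply: contrapT => ab.
have [_ [Ainf Adis]] := hA.
apply: (Ainf a).
apply: (@sub_finite_set _ _ ((A a `&` A b) `|` K)).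
  move=> k Ak; case: (pselect (K k)) => Kk; [by right|left].
  by split => //; case: (sub k (conj Ak Kk)).
by rewrite finite_setU; split => //; apply: Adis.
Qed.

Lemma rho_sub_tail a (K E : set nat) q : finite_set K -> E = A a `\` K -> rho01 A x E q ->
  exists i j, (0 < i)%N /\ (forall k, A a k -> K k -> (k < i)%N) /\ x a i j = q.
Proof.
move=> fK hE [a' [K' [fK' [hE' [i [j [i0 [hk hq]]]]]]]].
have aa : a' = a by apply: (@sub_same a' a K' K) => //; rewrite -hE' hE.
subst a'; exists i, j; split => //; split => // k Ak Kk.
apply: hk => //; apply: contrapT => nK'.
have : E k by rewrite hE'; split.
by rewrite hE => -[].
Qed.

Lemma tail_sub_rho a (K : set nat) : finite_set K ->
  exists N, tail_image (x a) N `<=` rho01 A x (A a `\` K).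
Proof.
move=> fK; have [N HN] := finite_bound fK.
exists N => q [i [j [Ni hq]]].
exists a, K; split => //; split => //; exists i, j; split; first lia.
split => // k _ /HN; lia.
Qed.

Lemma tail_nconv a N : ~ conv01 R (tail_image (x a) N).
Proof. by have [/(_ a) [_ [_ h]] _] := hx. Qed.

Lemma xinj a i j i' j' : x a i j = x a i' j' -> i = i' /\ j = j'.
Proof.
have [/(_ a) [_ [h _]] _] := hx.
by move=> e; have := h (i, j) (i', j') e => -[-> ->].
Qed.

Lemma key (B : set Lam) : ~ conv01 R B -> exists b, forall i j, B (x b i j).
Proof.
move=> /main_constr [y [yX yB]].
have [_ [_ hs]] := hx.
have [b hb] := hs y yX; exists b; by rewrite hb.
Qed.

Lemma rho_Ab b q : rho01 A x (A b) q -> exists i j, x b i j = q.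
Proof.
move=> h; have := @rho_sub_tail b set0 (A b) q (finite_set0 _) (esym (setD0 _)) h.
by move=> [i [j [_ [_ hq]]]]; exists i, j.
Qed.

Lemma Abar_Ab b : Abar A (A b).
Proof. by exists b, set0; split; [exact: finite_set0|rewrite setD0]. Qed.

End Main.

Unset Implicit Arguments.
Local Close Scope ring_scope.

Theorem proposition6p4 (R : realType) (A : R -> set nat)
  (x : R -> nat -> nat -> Lam) :
  almost_disjoint_family A -> enumeration_of_X x ->
  partition_regular (Abar A) (rho01 A x) /\ I_rho (Abar A) (rho01 A x) = conv01 R.
Proof.
move=> hA hx.
have [Ainj [Ainf Adis]] := hA.
split; last first.
  apply/funext => B; apply/propext; split.
  - move=> hI; apply: contrapT => nB.
    have [b hb] := key hx nB.
    apply: (hI (A b) (Abar_Ab A b)) => q /(rho_Ab hA) [i [j <-]]; exact: hb.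
  - move=> cB E [a [K [fK ->]]] sub.
    have [N HN] := tail_sub_rho A x a fK.
    apply: (@tail_nconv _ _ hx a N); apply: conv_sub cB _.
    by move=> q /HN /sub.
split; first by exists (A 0%R); exact: Abar_Ab.
split.
  by move=> E [a [K [fK ->]]]; apply: infinite_setD.
split.
  move=> E K [a [K' [fK' ->]]] fK; exists a, (K' `|` K); split.
    by rewrite finite_setU.
  by rewrite setDDl.
split.
  move=> E [a [K [fK ->]]].
  have [N HN] := tail_sub_rho A x a fK.
  apply: (sub_infinite_set HN).
  apply: (@inf_ev _ (x a N.+1)).
    by move=> j j' /(xinj hx) [].
  by exists 0%N => j _; exists N.+1, j; split.
split.
  move=> E G [a [K [fK ->]]] [b [K' [fK' ->]]] EG.
  have ab := sub_same hA fK EG; subst b.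
  move=> q /(rho_sub_tail hA fK (erefl _)) [i [j [i0 [hk hq]]]].
  exists a, K'; split => //; split => //; exists i, j; split => //; split => // k Ak K'k.
  apply: hk => //; apply: contrapT => nK.
  by case: (EG k (conj Ak nK)).
split.
  move=> G B1 B2 [a [K [fK ->]]] hG.
  have nc : ~ conv01 R (B1 `|` B2).
    rewrite -hG => hc.
    have [N HN] := tail_sub_rho A x a fK.
    exact: (@tail_nconv _ _ hx a N (conv_sub hc HN)).
  have [n1|n2] : ~ conv01 R B1 \/ ~ conv01 R B2.
    apply: contrapT => hn; apply: nc; apply: conv_union; apply: contrapT => h; apply: hn; by [left|right].
  - have [b hb] := key hx n1.
    exists (A b); split; first exact: Abar_Ab.
    by left => q /(rho_Ab hA) [i [j <-]].
  - have [b hb] := key hx n2.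
    exists (A b); split; first exact: Abar_Ab.
    by right => q /(rho_Ab hA) [i [j <-]].
move=> E [a [K [fK ->]]].
exists (A a `\` K); split; first by exists a, K.
split => // q /(rho_sub_tail hA fK (erefl _)) [i [j [i0 [hk hq]]]].
have [k [Ak ik]] : exists k, A a k /\ (i <= k)%N.
  apply: contrapT => hn; apply: (Ainf a).
  apply: (@sub_finite_set _ _ `I_i) => // k Ak /=.
  rewrite ltnNge; apply/negP => ik; apply: hn; by exists k.
exists [set k]; split; first exact: finite_set1.
rewrite setDDl => /(rho_sub_tail hA (_ : finite_set (K `|` [set k])) (erefl _)).
move=> /(_ _) [|i' [j' [_ [hk' hq']]]].
  by rewrite finite_setU; split => //; exact: finite_set1.
have := hk' k Ak (or_intror erefl).
have [ii' _] := xinj hx (etrans hq (esym hq')).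
subst i'; lia.
Qed.
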